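(* For all integers $n\ge 2$ and $M\ge 1$, $C_{AD}(n,M)\le C_{CD}(n,M)\le (n-1)\log_2 M$.
   Context: There are $n$ nodes labeled $1,\dots,n$; node $i$ privately holds an input $x_i\in\{1,\dots,M\}$. Communication is over private point-to-point links of a fully connected synchronous network. A deterministic protocol $P$ is a fixed finite schedule of steps $l=1,\dots,L(P)$; in step $l$ a prescribed node $T_l$ sends to a prescribed node $R_l\neq T_l$ one symbol $f_l(x_{T_l},T_l^+(l))$, where $T_l^+(l)$ is the sequence of symbols $T_l$ has received in steps $1,\dots,l-1$; only $R_l$ receives it. Its complexity is $C(P)=\sum_{l}\log_2 S_l(P)$, with $S_l(P)$ the number of distinct values of the step-$l$ symbol over all inputs in $\{1,\dots,M\}^n$. At the end each node $i$ outputs a bit $EQ_i$ depending on $x_i$ and the symbols it received. $P$ solves MEQ-AD$(n,M)$ if for every input, $EQ_1=\cdots=EQ_n=0$ iff $x_1=\cdots=x_n$; $P$ solves MEQ-CD$(n,M)$ if for every input, $EQ_n=0$ iff $x_1=\cdots=x_n$. $C_{AD}(n,M)$ and $C_{CD}(n,M)$ are the infima of $C(P)$ over protocols solving MEQ-AD$(n,M)$, respectively MEQ-CD$(n,M)$. *)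

(* Defs.v *)
From HB Require Import structures.
From mathcomp Require Import all_boot all_order all_algebra.
From mathcomp Require Import all_classical all_reals.
From mathcomp Require Import exp.
Set Implicit Arguments. Unset Strict Implicit. Unset Printing Implicit Defensive.
Import Order.TTheory GRing.Theory Num.Theory.

(* Nodes 1..n are represented by 'I_n (node i+1 <-> ordinal i; node n is
   ord_max); input values 1..M are represented by 'I_M (value v+1 <-> v).
   Symbols are natural numbers (the alphabet is unrestricted; the cost only
   counts how many distinct values a step actually takes). *)

Record protocol (n M : nat) := Protocol {
  plen : nat;
  psend : nat -> 'I_n;                         (* T_l (step l is index l, 0-based) *)
  precv : nat -> 'I_n;
  pmsg : nat -> 'I_M -> seq nat -> nat;        (* f_l (own input, received so far) *)
  pout : 'I_n -> 'I_M -> seq nat -> bool       (* EQ_i (own input, all received); false = 0 *)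
}.

Section Exec.
Variables (n M : nat) (P : protocol n M).

Definition received (s : seq nat) (i : 'I_n) : seq nat :=
  [seq nth 0 s k | k <- iota 0 (size s) & precv P k == i].

Fixpoint transcript (x : 'I_n -> 'I_M) (l : nat) : seq nat :=
  match l with
  | 0 => [::]
  | l'.+1 => let s := transcript x l' in
             rcons s (pmsg P l' (x (psend P l')) (received s (psend P l')))
  end.

Definition step_symbol (x : 'I_n -> 'I_M) (l : nat) : nat :=
  nth 0 (transcript x (plen P)) l.

Definition output (x : 'I_n -> 'I_M) (i : 'I_n) : bool :=
  pout P i (x i) (received (transcript x (plen P)) i).

Definition well_formed : Prop := forall l, l < plen P -> psend P l != precv P l.

Definition nb_values (l : nat) : nat :=
  size (undup (map (fun f : {ffun 'I_n -> 'I_M} => step_symbol (fun i => f i) l)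
                    (enum {ffun 'I_n -> 'I_M}))).

Definition all_equal (x : 'I_n -> 'I_M) : Prop := forall i j, x i = x j.

Definition solves_AD : Prop :=
  well_formed /\ forall x : 'I_n -> 'I_M, (forall i, output x i = false) <-> all_equal x.

(* node n (the ordinal with value n-1) decides *)
Definition solves_CD : Prop :=
  well_formed /\ forall (x : 'I_n -> 'I_M) (i : 'I_n), val i = n.-1 ->
    (output x i = false <-> all_equal x).
End Exec.

Local Open Scope ring_scope.
Local Open Scope classical_set_scope.

Definition log2 {R : realType} (r : R) : R := ln r / ln 2.

Definition cost {R : realType} {n M : nat} (P : protocol n M) : R :=
  \sum_(l < plen P) log2 ((nb_values P l)%:R).

Definition C_AD (R : realType) (n M : nat) : R :=
  inf [set c : R | exists P : protocol n M, solves_AD P /\ c = cost P].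

Definition C_CD (R : realType) (n M : nat) : R :=
  inf [set c : R | exists P : protocol n M, solves_CD P /\ c = cost P].

(* Main.v *)
Require Import Defs.
From mathcomp Require Import all_boot all_order all_algebra.
From mathcomp Require Import all_classical all_reals.
From mathcomp Require Import exp.
Import Order.TTheory GRing.Theory Num.Theory.
Local Open Scope ring_scope.
Set Implicit Arguments. Unset Strict Implicit.

Lemma log2_ge0 (R : realType) (k : nat) : 0 <= log2 (k%:R : R).
Proof.
rewrite /log2; apply: divr_ge0; last exact/ltW/ln_gt0/ltr1n.
case: k => [|k]; first by rewrite ln0.
by apply: ln_ge0; rewrite ler1n.
Qed.

Lemma log2_le (R : realType) (k m : nat) : (1 <= m)%N -> (k <= m)%N ->
  log2 (k%:R : R) <= log2 (m%:R : R).
Proof.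
move=> hm hkm; rewrite /log2; apply: ler_pM => //; last 2 first.
- by rewrite invr_ge0; exact/ltW/ln_gt0/ltr1n.
- case: k hkm => [|k] hkm; first by rewrite ln0 //; apply: ln_ge0; rewrite ler1n.
  by rewrite ler_ln ?posrE ?ltr0n ?ler_nat //; apply: leq_trans hkm.
- case: k hkm => [|k] hkm; first by rewrite ln0.
  by apply: ln_ge0; rewrite ler1n.
Qed.

Lemma cost_ge0 (R : realType) n M (P : protocol n M) : 0 <= (cost P : R).
Proof. by apply: sumr_ge0 => l _; exact: log2_ge0. Qed.

Definition mkAD n M (P : protocol n M) : protocol n M :=
  Protocol (plen P) (psend P) (precv P) (pmsg P)
    (fun i v r => if val i == n.-1 then pout P i v r else false).

Lemma transcript_mkAD n M (P : protocol n M) x l :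
  transcript (mkAD P) x l = transcript P x l.
Proof. by elim: l => //= l ->. Qed.

Lemma cost_mkAD (R : realType) n M (P : protocol n M) :
  (cost (mkAD P) : R) = cost P.
Proof.
rewrite /cost /=; apply: eq_bigr => l _.
rewrite /nb_values; congr (log2 (size (undup _))%:R).
Qed.

Lemma solves_mkAD n M (P : protocol n M) : (0 < n)%N -> solves_CD P -> solves_AD (mkAD P).
Proof.
move=> n0 [wf H]; split; first exact: wf.
move=> x; have ho : (n.-1 < n)%N by rewrite prednK.
have E : forall i, output (mkAD P) x i =
    if val i == n.-1 then output P x i else false.
  by move=> i; rewrite /output /= transcript_mkAD.
split.
- move=> h; apply/(H x (Ordinal ho)) => //.
  by have := h (Ordinal ho); rewrite E /= eqxx.
- move=> heq i; rewrite E; case: eqP => // hi.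
  exact/(H x i hi).
Qed.

Definition naive n' M : protocol n'.+2 M :=
  Protocol n'.+1 (fun l => inord l) (fun _ => ord_max)
    (fun _ v _ => val v)
    (fun _ v r => ~~ all (fun k => k == val v) r).

Lemma transcript_naive n' M x l :
  transcript (naive n' M) x l = [seq val (x (inord k)) | k <- iota 0 l].
Proof.
elim: l => // l IH; rewrite [LHS]/= IH.
have -> : iota 0 l.+1 = rcons (iota 0 l) l by rewrite -addn1 iotaD cats1.
by rewrite map_rcons.
Qed.

Lemma received_naive n' M (s : seq nat) :
  received (naive n' M) s ord_max = s.
Proof.
rewrite /received.
have -> : [seq k <- iota 0 (size s) | precv (naive n' M) k == ord_max] = iota 0 (size s).
  by apply/all_filterP/allP => k _ /=.
exact: mkseq_nth.
Qed.

Lemma output_naive n' M x : output (naive n' M) x ord_max =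
  ~~ all (fun k => k == val (x ord_max)) [seq val (x (inord k)) | k <- iota 0 n'.+1].
Proof. by rewrite /output received_naive transcript_naive. Qed.

Lemma naive_CD n' M : solves_CD (naive n' M).
Proof.
split.
  move=> l hl /=; apply/eqP => /(congr1 val) /=.
  by rewrite inordK; last exact: (leq_trans hl); move=> e; rewrite e ltnn in hl.
move=> x i hi.
have -> : i = ord_max by apply: val_inj; rewrite /= hi.
rewrite output_naive.
split.
- move/negbFE/allP => h.
  have hx : forall j, x j = x ord_max.
    move=> j; case: (ltnP j n'.+1) => hj.
      apply: val_inj; apply/eqP; apply: h; apply/mapP; exists (val j).
        by rewrite mem_iota.
      have -> : (inord j : 'I_n'.+2) = j by apply: val_inj; rewrite /= inordK // ltnW.
      by [].
    by congr x; apply: val_inj => /=; apply/eqP; rewrite eqn_leq hj -ltnS ltn_ord.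
  by move=> a b; rewrite !hx.
- move=> heq; apply/negbF/allP => k /mapP [j _ ->].
  by rewrite (heq _ ord_max).
Qed.

Lemma naive_cost (R : realType) n' M : (1 <= M)%N ->
  (cost (naive n' M) : R) <= (n'.+1)%:R * log2 (M%:R : R).
Proof.
move=> hM; rewrite /cost /=.
apply: (@le_trans _ _ (\sum_(l < n'.+1) log2 (M%:R : R))); last first.
  by rewrite sumr_const card_ord mulr_natl.
apply: ler_sum => l _; apply: log2_le => //.
rewrite /nb_values -(size_iota 0 M); apply: uniq_leq_size; first exact: undup_uniq.
move=> k; rewrite mem_undup => /mapP [f _ ->].
rewrite mem_iota add0n /step_symbol transcript_naive.
have hl : (l < n'.+1)%N := ltn_ord l.
rewrite (nth_map 0) ?size_iota // nth_iota //.
by rewrite leq0n /=; apply: leq_trans (ltn_ord _) _; rewrite size_iota.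
Qed.

Theorem mainTheorem5 (R : realType) (n M : nat) (hn : (2 <= n)%N) (hM : (1 <= M)%N) :
  C_AD R n M <= C_CD R n M /\ C_CD R n M <= (n.-1)%:R * log2 (M%:R : R).
Proof.
case: n hn => [|[|n']] // hn.
have lbAD : has_lbound [set c : R | exists P : protocol n'.+2 M, solves_AD P /\ c = cost P].
  by exists 0 => c [P [_ ->]]; exact: cost_ge0.
have lbCD : has_lbound [set c : R | exists P : protocol n'.+2 M, solves_CD P /\ c = cost P].
  by exists 0 => c [P [_ ->]]; exact: cost_ge0.
have neCD : ([set c : R | exists P : protocol n'.+2 M, solves_CD P /\ c = cost P] !=set0)%classic.
  by exists (cost (naive n' M)); exists (naive n' M); split; [exact: naive_CD | reflexivity].
split.
- apply: lb_le_inf => // c [P [hP ->]].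
  rewrite -cost_mkAD; apply: (ge_inf lbAD).
  by exists (mkAD P); split; [exact: solves_mkAD | reflexivity].
- apply: le_trans (naive_cost R n' hM).
  apply: (ge_inf lbCD); exists (naive n' M); split; [exact: naive_CD | reflexivity].
Qed.
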